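(* Consider particles indexed by $x\in[0,1]$ with trajectories $y(t,x)$ solving $\frac{d^2y}{dt^2}=F(y)$, $y(0,x)=x$, $\frac{dy}{dt}(0,x)=v(x)$, where $v$ is a $C^1$ function on $[0,1]$. Say there are no collisions if $y(t,x)\ne y(t,x')$ for all $t\ge0$ and all $x\ne x'$ in $[0,1]$. 1) (one gap) Let $F_1>0$, $F_2\ge0$, $A>1$, and $F(x)=F_1$ for $0\le x<A$, $F(x)=F_2$ for $x\ge A$. If $v(x)=0$ for all $x\in[0,1]$, then there are no collisions if and only if $F_2\ge F_1$. If $v(x)\ge0$ for all $x\in[0,1]$, then there are no collisions if and only if for all $x\in[0,1]$ both $$-2(A-x)v'(x)<v(x)+\sqrt{D(x)}\quad\text{and}\quad v'(x)\big((F_1-F_2)v(x)+F_2\sqrt{D(x)}\big)\ge F_1(F_1-F_2)$$ hold, where $D(x)=v^2(x)+2F_1(A-x)$. 2) (two gaps) Let $v(x)=0$ for all $x\in[0,1]$, let $0<F_2<F_1$, $F_2<F_3$, $1<A<B$, and $F(x)=F_1$ for $0\le x<A$, $F(x)=F_2$ for $x\in[A,B)$, $F(x)=F_3$ for $x\ge B$. Then there are no collisions if and only if $$B-A\le\alpha(A-1),\qquad \alpha=\frac{F_1(F_3-F_1)\big(F_3(F_1-F_2)+F_1(F_3-F_2)\big)}{(F_1-F_2)^2F_3^2}.$$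
   Context: One-dimensional continuum of non-interacting unit-mass point particles, each $x\in[0,1]$ starting at position $x$ with velocity $v(x)$ and moving under the piecewise constant external force $F$. *)

(* Defs.v *)
From Stdlib Require Import Reals.
From Coquelicot Require Import Coquelicot.
Open Scope R_scope.

(* Piecewise constant force with one gap: F1 on [0,A), F2 on [A,oo).
   (Values left of 0 are irrelevant: particles start in [0,1] and move right.) *)
Definition F_one_gap (F1 F2 A : R) (z : R) : R :=
  if Rlt_dec z A then F1 else F2.

Definition F_two_gaps (F1 F2 F3 A B : R) (z : R) : R :=
  if Rlt_dec z A then F1 else if Rlt_dec z B then F2 else F3.

(* Trajectory in the (Caratheodory / integral) sense, appropriate for a
   discontinuous force: there is a velocity field w with
     w(t,x) = v(x) + int_0^t F(y(s,x)) ds,   y(t,x) = x + int_0^t w(s,x) ds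
   for all t >= 0 and x in [0,1]; i.e. y(.,x) is C^1, y(0,x)=x,
   dy/dt(0,x)=v(x), and d^2y/dt^2 = F(y) (wherever F(y) is continuous). *)
Definition is_trajectory (F : R -> R) (v : R -> R) (y : R -> R -> R) : Prop :=
  exists w : R -> R -> R,
    forall x, 0 <= x <= 1 -> forall t, 0 <= t ->
      is_RInt (fun s => F (y s x)) 0 t (w t x - v x) /\
      is_RInt (fun s => w s x) 0 t (y t x - x).

Definition no_collisions (y : R -> R -> R) : Prop :=
  forall t, 0 <= t -> forall x x', 0 <= x <= 1 -> 0 <= x' <= 1 -> x <> x' ->
    y t x <> y t x'.

Definition Dfun (F1 A : R) (v : R -> R) (x : R) : R := (v x)^2 + 2 * F1 * (A - x).

Definition alpha (F1 F2 F3 : R) : R :=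
  F1 * (F3 - F1) * (F3 * (F1 - F2) + F1 * (F3 - F2)) / ((F1 - F2)^2 * F3^2).

(* Main.v *)
Require Import Defs.
From Stdlib Require Import Reals Lra.
From Coquelicot Require Import Coquelicot.
Open Scope R_scope.

Module P1.

Lemma RInt_uniq (f : R -> R) a b l1 l2 :
  is_RInt f a b l1 -> is_RInt f a b l2 -> l1 = l2.
Proof.
  intros H1 H2. rewrite <- (is_RInt_unique _ _ _ _ H1), <- (is_RInt_unique _ _ _ _ H2). reflexivity.
Qed.

Lemma RInt_sub (f : R -> R) t0 t l1 l2 :
  0 <= t0 <= t -> is_RInt f 0 t0 l1 -> is_RInt f 0 t l2 -> is_RInt f t0 t (l2 - l1).
Proof.
  intros Ht H1 H2.
  destruct (Req_dec t0 0) as [E0|N0].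
  { subst t0. assert (l1 = 0). { apply (RInt_uniq f 0 0); auto. apply (is_RInt_point f 0). }
    subst l1. rewrite Rminus_0_r. auto. }
  destruct (Req_dec t0 t) as [E1|N1].
  { subst t0. assert (l1 = l2) by (apply (RInt_uniq f 0 t); auto). subst l1.
    rewrite Rminus_eq_0. apply (is_RInt_point f t). }
  apply (is_RInt_Chasles_2 f 0 t0 t l2 l1); auto. lra.
Qed.

Lemma RInt_lin (w0 f t0 t : R) :
  is_RInt (fun r => w0 + f * (r - t0)) t0 t (w0 * (t - t0) + f * (t - t0)^2 / 2).
Proof.
  set (G := fun r => w0 * (r - t0) + f * (r - t0)^2 / 2).
  replace (w0 * (t - t0) + f * (t - t0)^2 / 2) with (minus (G t) (G t0)).
  2:{ unfold G, minus, plus, opp; simpl. unfold Rminus; ring_simplify. field. }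
  apply (is_RInt_derive G). 
  - intros x _. assert (D : is_derive G x (w0 + f * (x - t0))) by (unfold G; auto_derive; auto; field). exact D.
  - intros x _. apply (ex_derive_continuous (fun r => w0 + f * (r - t0))). auto_derive; auto.
Qed.

Lemma RInt_cst (c t0 t : R) : is_RInt (fun _ => c) t0 t (c * (t - t0)).
Proof.
  replace (c * (t - t0)) with (scal (t - t0) c). apply (@is_RInt_const R_NormedModule).
  unfold scal; simpl; unfold mult; simpl. ring.
Qed.

Definition traj_rel (F : R -> R) (v0 x0 : R) (Y W : R -> R) : Prop :=
  forall t, 0 <= t -> is_RInt (fun s => F (Y s)) 0 t (W t - v0) /\ is_RInt W 0 t (Y t - x0).

Section Traj.
Variables (F : R -> R) (M v0 x0 : R) (Y W : R -> R).
Hypothesis HF : forall z, 0 <= F z <= M.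
Hypothesis Hv0 : 0 <= v0.
Hypothesis HT : traj_rel F v0 x0 Y W.

Lemma W_inc t0 t : 0 <= t0 <= t -> is_RInt (fun s => F (Y s)) t0 t (W t - W t0).
Proof.
  intros H. replace (W t - W t0) with ((W t - v0) - (W t0 - v0)) by ring.
  apply RInt_sub; auto. apply HT; lra. apply HT; lra.
Qed.

Lemma Y_inc t0 t : 0 <= t0 <= t -> is_RInt W t0 t (Y t - Y t0).
Proof.
  intros H. replace (Y t - Y t0) with ((Y t - x0) - (Y t0 - x0)) by ring.
  apply RInt_sub; auto. apply HT; lra. apply HT; lra.
Qed.

Lemma W_bounds t0 t : 0 <= t0 <= t -> W t0 <= W t <= W t0 + M * (t - t0).
Proof.
  intros H. pose proof (W_inc t0 t H) as I. split.
  - assert (0 <= W t - W t0). { apply (is_RInt_ge_0 (fun s => F (Y s)) t0 t _); try lra; auto. intros; apply HF. } lra.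
  - assert (W t - W t0 <= M * (t - t0)). { apply (is_RInt_le (fun s => F (Y s)) (fun _ => M) t0 t _ _); try lra; eauto. apply RInt_cst. intros; apply HF. }
    lra.
Qed.

Lemma W_nonneg t : 0 <= t -> 0 <= W t.
Proof.
  intros H. pose proof (proj1 (HT t H)) as I.
  assert (0 <= W t - v0). { apply (is_RInt_ge_0 (fun s => F (Y s)) 0 t _); try lra; auto. intros; apply HF. } lra.
Qed.

Lemma Y_mono t0 t : 0 <= t0 <= t -> Y t0 <= Y t.
Proof.
  intros H. pose proof (Y_inc t0 t H) as I.
  assert (0 <= Y t - Y t0). { apply (is_RInt_ge_0 W t0 t _); try lra; auto. intros; apply W_nonneg; lra. } lra.
Qed.

Lemma Y_upper t0 t : 0 <= t0 <= t -> Y t <= Y t0 + (W t0 + M * (t - t0)) * (t - t0).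
Proof.
  intros H. pose proof (Y_inc t0 t H) as I.
  assert (Y t - Y t0 <= (W t0 + M * (t - t0)) * (t - t0)).
  { apply (is_RInt_le W (fun _ => W t0 + M * (t - t0)) t0 t _ _); try lra; eauto. apply RInt_cst.
    intros r Hr. pose proof (W_bounds t0 r ltac:(lra)). nra. }
  lra.
Qed.

Lemma phase (t0 t1 f a : R) :
  0 <= t0 <= t1 -> Y t0 < a ->
  (forall r, t0 <= r -> Y r < a -> F (Y r) = f) ->
  (forall s, t0 <= s < t1 -> Y t0 + W t0 * (s - t0) + f * (s - t0)^2 / 2 < a) ->
  forall s, t0 <= s <= t1 ->
    W s = W t0 + f * (s - t0) /\ Y s = Y t0 + W t0 * (s - t0) + f * (s - t0)^2 / 2.
Proof.
  intros Ht Ha HFa HQ.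
  set (E := fun s => t0 <= s <= t1 /\ Y s < a).
  assert (Eb : bound E). { exists t1. intros s [Hs _]. lra. }
  assert (Ee : exists s, E s). { exists t0. split; [lra|auto]. }
  destruct (completeness E Eb Ee) as [sig [Hub Hlub]].
  assert (Hs0 : t0 <= sig). { apply Hub. split; [lra|auto]. }
  assert (Hs1 : sig <= t1). { apply Hlub. intros s [Hs _]. lra. }
  assert (CA : forall r, t0 <= r < sig -> Y r < a).
  { intros r Hr. destruct (Rle_lt_dec sig r) as [Hc|Hc]; [lra|].
    assert (exists e, E e /\ r < e).
    { apply Classical_Prop.NNPP. intro Hn. assert (sig <= r).
      { apply Hlub. intros e He. destruct (Rle_lt_dec e r); auto. exfalso; apply Hn; exists e; auto. } lra. }
    destruct H as [e [[He1 He2] He3]]. pose proof (Y_mono r e ltac:(lra)). lra. }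
  assert (CB : forall r, t0 <= r <= sig -> W r = W t0 + f * (r - t0)).
  { intros r Hr. pose proof (W_inc t0 r ltac:(lra)) as I.
    assert (I2 : is_RInt (fun _ => f) t0 r (W r - W t0)).
    { apply (is_RInt_ext (fun s => F (Y s))); auto. intros x Hx.
      rewrite Rmin_left in Hx by lra. rewrite Rmax_right in Hx by lra.
      apply HFa. lra. apply CA. lra. }
    pose proof (RInt_uniq _ _ _ _ _ I2 (RInt_cst f t0 r)). lra. }
  assert (CC : forall r, t0 <= r <= sig -> Y r = Y t0 + W t0 * (r - t0) + f * (r - t0)^2 / 2).
  { intros r Hr. pose proof (Y_inc t0 r ltac:(lra)) as I.
    assert (I2 : is_RInt (fun s => W t0 + f * (s - t0)) t0 r (Y r - Y t0)).
    { apply (is_RInt_ext W); auto. intros x Hx.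
      rewrite Rmin_left in Hx by lra. rewrite Rmax_right in Hx by lra.
      apply CB. lra. }
    pose proof (RInt_uniq _ _ _ _ _ I2 (RInt_lin (W t0) f t0 r)). lra. }
  assert (CD : sig = t1).
  { destruct (Req_dec sig t1) as [e|n]; auto. exfalso.
    assert (Hlt : sig < t1) by lra.
    assert (Hys : Y sig < a). { rewrite CC by lra. apply HQ. lra. }
    set (gap := a - Y sig).
    assert (Wn : 0 <= W sig) by (apply W_nonneg; lra).
    assert (HM : 0 <= M) by (pose proof (HF 0); lra).
    set (d := Rmin (t1 - sig) (Rmin 1 (gap / (W sig + M + 1) / 2))).
    assert (Hd1 : d <= t1 - sig) by (apply Rmin_l).
    assert (Hd2 : d <= 1) by (unfold d; rewrite Rmin_comm; eapply Rle_trans; [apply Rmin_l| apply Rmin_l]).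
    assert (Hd3 : d <= gap / (W sig + M + 1) / 2)
      by (unfold d; rewrite Rmin_comm; eapply Rle_trans; [apply Rmin_l| apply Rmin_r]).
    assert (Hgp : 0 < gap / (W sig + M + 1) / 2).
    { unfold gap. apply Rmult_lt_0_compat; [|lra]. apply Rdiv_lt_0_compat; lra. }
    assert (Hd0 : 0 < d). { unfold d. apply Rmin_glb_lt. lra. apply Rmin_glb_lt; lra. }
    assert (Hd4 : d * (W sig + M + 1) <= gap / 2).
    { apply Rmult_le_compat_r with (r := W sig + M + 1) in Hd3; [|lra].
      replace (gap / (W sig + M + 1) / 2 * (W sig + M + 1)) with (gap / 2) in Hd3 by (field; lra). lra. }
    pose proof (Y_upper sig (sig + d) ltac:(lra)) as U.
    assert (E (sig + d)).
    { split. lra. replace (sig + d - sig) with d in U by ring.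
      assert (M * d <= M) by nra. assert ((W sig + M * d) * d <= d * (W sig + M + 1)) by nra. unfold gap in *. lra. }
    pose proof (Hub _ H). lra. }
  intros s Hs. split. apply CB; lra. apply CC; lra.
Qed.
End Traj.

End P1.
Import P1.

Module P2.

Section One.
Variables (F1 F2 A : R) (v dv : R -> R).
Hypothesis HF1 : 0 < F1.
Hypothesis HF2 : 0 <= F2.
Hypothesis HA : 1 < A.
Hypothesis Hder : forall x, 0 <= x <= 1 -> is_derive v x (dv x).
Hypothesis Hv : forall x, 0 <= x <= 1 -> 0 <= v x.

Definition DD z := v z ^ 2 + 2 * F1 * (A - z).
Definition SS z := sqrt (DD z).
Definition tau z := (SS z - v z) / F1.
Definition P1 t z := z + v z * t + F1 * t ^ 2 / 2.
Definition P2 t z := A + SS z * (t - tau z) + F2 * (t - tau z) ^ 2 / 2.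
Definition Yex t z := P1 (Rmin t (tau z)) z + (P2 (Rmax t (tau z)) z - A).
Definition Sd z := (v z * dv z - F1) / SS z.
Definition taud z := (Sd z - dv z) / F1.
Definition gg z := 1 + dv z * tau z.
Definition cc z := Sd z - F2 * taud z.

Section Pt.
Variable z : R.
Hypothesis Hz : 0 <= z <= 1.

Lemma DD_pos : 0 < DD z.
Proof. unfold DD. pose proof (Hv z Hz). nra. Qed.
Lemma SS_pos : 0 < SS z.
Proof. unfold SS. apply sqrt_lt_R0. apply DD_pos. Qed.
Lemma SS_sq : SS z ^ 2 = DD z.
Proof. unfold SS. simpl. rewrite Rmult_1_r. apply sqrt_sqrt. pose proof DD_pos; lra. Qed.
Lemma SS_gt_v : v z < SS z.
Proof. pose proof SS_sq. pose proof SS_pos. pose proof (Hv z Hz). unfold DD in *. nra. Qed.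
Lemma tau_pos : 0 < tau z.
Proof. unfold tau. pose proof SS_gt_v. apply Rdiv_lt_0_compat; lra. Qed.
Lemma v_tau : v z + F1 * tau z = SS z.
Proof. unfold tau. field. lra. Qed.
Lemma P1_tau : P1 (tau z) z = A.
Proof.
  pose proof SS_sq. unfold P1, DD in *. unfold tau.
  apply Rmult_eq_reg_r with (r := 2 * F1); [|lra].
  field_simplify; [|lra]. rewrite H. ring.
Qed.
Lemma P2_tau : P2 (tau z) z = A.
Proof. unfold P2. rewrite Rminus_diag. field. Qed.
Lemma Yex_ph1 t : t <= tau z -> Yex t z = P1 t z.
Proof.
  intros H. unfold Yex. rewrite Rmin_left by lra. rewrite Rmax_right by lra.
  rewrite P2_tau. field.
Qed.
Lemma Yex_ph2 t : tau z <= t -> Yex t z = P2 t z.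
Proof.
  intros H. unfold Yex. rewrite Rmin_right by lra. rewrite Rmax_left by lra.
  rewrite P1_tau. field.
Qed.
Lemma P1_lt s : 0 <= s < tau z -> P1 s z < A.
Proof.
  intros H. rewrite <- P1_tau. unfold P1. pose proof (Hv z Hz).
  assert (0 < (tau z - s) * (v z + F1 * (tau z + s) / 2)) by (apply Rmult_lt_0_compat; nra).
  nra.
Qed.
Lemma P2_mono s t : tau z <= s <= t -> P2 s z <= P2 t z.
Proof.
  intros H. unfold P2. pose proof SS_pos.
  assert (0 <= (t - s) * (SS z + F2 * ((t - tau z) + (s - tau z)) / 2)) by (apply Rmult_le_pos; nra).
  nra.
Qed.
Lemma P2_gt t : tau z < t -> A < P2 t z.
Proof.
  intros H. unfold P2. pose proof SS_pos.
  assert (0 < SS z * (t - tau z)) by (apply Rmult_lt_0_compat; lra).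
  assert (0 <= F2 * (t - tau z) ^ 2 / 2) by (assert (0 <= (t - tau z)^2) by nra; nra). lra.
Qed.

End Pt.
End One.

End P2.
Import P2.

Module P3.

Lemma RInt_pt0 (f : R -> R) a l : is_RInt f a a l -> l = 0.
Proof. intros H. apply (RInt_uniq f a a); auto. apply (is_RInt_point f a). Qed.

Section One.
Variables (F1 F2 A : R) (v dv : R -> R).
Hypothesis HF1 : 0 < F1.
Hypothesis HF2 : 0 <= F2.
Hypothesis HA : 1 < A.
Hypothesis Hder : forall x, 0 <= x <= 1 -> is_derive v x (dv x).
Hypothesis Hv : forall x, 0 <= x <= 1 -> 0 <= v x.

Lemma traj1 (y : R -> R -> R) : is_trajectory (F_one_gap F1 F2 A) v y ->
  forall x, 0 <= x <= 1 -> forall t, 0 <= t -> y t x = Yex F1 F2 A v t x.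
Proof.
  intros [w Hw] x Hx t Ht.
  set (F := F_one_gap F1 F2 A).
  set (Y := fun s => y s x). set (W := fun s => w s x).
  assert (HT : traj_rel F (v x) x Y W) by (intros s Hs; apply Hw; auto).
  assert (HF : forall z, 0 <= F z <= F1 + F2) by (intros z; unfold F, F_one_gap; destruct Rlt_dec; lra).
  assert (Hvx : 0 <= v x) by auto.
  assert (Y0 : Y 0 = x). { pose proof (RInt_pt0 _ _ _ (proj2 (HT 0 (Rle_refl 0)))). lra. }
  assert (W0 : W 0 = v x). { pose proof (RInt_pt0 _ _ _ (proj1 (HT 0 (Rle_refl 0)))). lra. }
  pose proof (tau_pos F1 A v HF1 HA Hv x Hx) as Htp.
  assert (Ph1 := phase F (F1 + F2) (v x) x Y W HF Hvx HT 0 (tau F1 A v x) F1 A ltac:(lra) ltac:(lra)).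
  assert (Ph1' : forall s, 0 <= s <= tau F1 A v x -> W s = v x + F1 * s /\ Y s = P1 F1 v s x).
  { intros s Hs. destruct (Ph1 ltac:(intros r _ Hr; unfold F, F_one_gap; destruct Rlt_dec; [auto|contradiction])
      ltac:(intros s' Hs'; rewrite Y0, W0; pose proof (P1_lt F1 A v HF1 HA Hv x Hx s' Hs'); unfold P1 in *;
            replace (s' - 0) with s' by ring; lra) s Hs) as [E1 E2].
    rewrite W0 in E1. rewrite Y0, W0 in E2. unfold P1. split. rewrite E1. ring. rewrite E2. field. }
  destruct (Rle_dec t (tau F1 A v x)) as [Hle|Hgt].
  { rewrite Yex_ph1 by auto. apply Ph1'. lra. }
  rewrite Yex_ph2 by (auto; lra).
  destruct (Ph1' (tau F1 A v x) ltac:(lra)) as [Wt Yt].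
  rewrite P1_tau in Yt by auto.
  rewrite v_tau in Wt by lra.
  pose proof (P2_mono F1 F2 A v HF1 HF2 HA Hv x Hx).
  pose proof (P2_gt F1 F2 A v HF1 HF2 HA Hv x Hx t ltac:(lra)).
  assert (Ph2 := phase F (F1 + F2) (v x) x Y W HF Hvx HT (tau F1 A v x) t F2 (P2 F1 F2 A v t x + 1) ltac:(lra) ltac:(lra)).
  assert (C1 : forall r, tau F1 A v x <= r -> Y r < P2 F1 F2 A v t x + 1 -> F (Y r) = F2).
  { intros r Hr _. pose proof (Y_mono F (F1+F2) (v x) x Y W HF Hvx HT (tau F1 A v x) r ltac:(lra)).
    unfold F, F_one_gap. destruct Rlt_dec. lra. auto. }
  assert (C2 : forall s, tau F1 A v x <= s < t -> Y (tau F1 A v x) + W (tau F1 A v x) * (s - tau F1 A v x) + F2 * (s - tau F1 A v x) ^ 2 / 2 < P2 F1 F2 A v t x + 1).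
  { intros s Hs. rewrite Yt, Wt. pose proof (H s t ltac:(lra)). unfold P2 in *. lra. }
  destruct (Ph2 C1 C2 t ltac:(lra)) as [_ E].
  change (Y t = P2 F1 F2 A v t x). rewrite E, Yt, Wt. unfold P2. reflexivity.
Qed.
End One.

End P3.
Import P3.

Module P4.

Section One.
Variables (F1 F2 A : R) (v dv : R -> R).
Hypothesis HF1 : 0 < F1.
Hypothesis HF2 : 0 <= F2.
Hypothesis HA : 1 < A.
Hypothesis Hder : forall x, 0 <= x <= 1 -> is_derive v x (dv x).
Hypothesis Hv : forall x, 0 <= x <= 1 -> 0 <= v x.

Let S z := SS F1 A v z.
Let ta z := tau F1 A v z.

Section Pt.
Variable z : R.
Hypothesis Hz : 0 <= z <= 1.

Let Spos := SS_pos F1 A v HF1 HA Hv z Hz.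
Let Ssq := SS_sq F1 A v HF1 HA Hv z Hz.
Let Dpos := DD_pos F1 A v HF1 HA Hv z Hz.

Lemma Dv : Derive (fun x => v x) z = dv z.
Proof. apply is_derive_unique. exact (Hder z Hz). Qed.

Lemma exv : ex_derive (fun x => v x) z.
Proof. exists (dv z). exact (Hder z Hz). Qed.

Lemma deriv_P1 t : is_derive (fun u => P1 F1 v t u) z (1 + dv z * t).
Proof.
  unfold P1. auto_derive. apply exv. rewrite Dv. ring.
Qed.

Ltac side_tac Dpos := repeat split; try apply exv; try (unfold DD in Dpos; simpl in Dpos |- *; lra).

Ltac main_tac z Spos :=
  rewrite ?Dv; unfold taud, Sd, tau, SS, DD in *;
  replace (v z * (v z * 1) + 2 * F1 * (A + - z)) with (v z ^ 2 + 2 * F1 * (A - z)) by ring;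
  set (q := sqrt (v z ^ 2 + 2 * F1 * (A - z))) in *;
  field; split; lra.

Lemma deriv_tau : is_derive (fun u => tau F1 A v u) z (taud F1 A v dv z).
Proof.
  unfold tau, SS, DD. auto_derive. side_tac Dpos. main_tac z Spos.
Qed.

Lemma deriv_P2 t : is_derive (fun u => P2 F1 F2 A v t u) z
   (Sd F1 A v dv z * (t - tau F1 A v z) - taud F1 A v dv z * (SS F1 A v z + F2 * (t - tau F1 A v z))).
Proof.
  unfold P2, tau, SS, DD. auto_derive. side_tac Dpos. main_tac z Spos.
Qed.
End Pt.
End One.

End P4.
Import P4.

Module P5.

Lemma der_cont (f : R -> R) z l : is_derive f z l -> continuity_pt f z.
Proof.
  intros H. apply continuity_pt_filterlim. apply (@ex_derive_continuous R_AbsRing R_NormedModule f z). exists l; auto.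
Qed.

Lemma incr_MVT (f df : R -> R) a b : a < b ->
  (forall z, a <= z <= b -> is_derive f z (df z)) -> (forall z, a <= z <= b -> 0 < df z) -> f a < f b.
Proof.
  intros Hab Hd Hp.
  destruct (MVT_gen f a b df) as [c [Hc E]].
  - intros z Hz. rewrite Rmin_left in Hz by lra. rewrite Rmax_right in Hz by lra. apply Hd; lra.
  - intros z Hz. rewrite Rmin_left in Hz by lra. rewrite Rmax_right in Hz by lra. apply (der_cont f z (df z)). apply Hd; lra.
  - rewrite Rmin_left in Hc by lra. rewrite Rmax_right in Hc by lra.
    pose proof (Hp c Hc). assert (0 < df c * (b - a)) by (apply Rmult_lt_0_compat; lra). lra.
Qed.

Section One.
Variables (F1 F2 A : R) (v dv : R -> R).
Hypothesis HF1 : 0 < F1.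
Hypothesis HF2 : 0 <= F2.
Hypothesis HA : 1 < A.
Hypothesis Hder : forall x, 0 <= x <= 1 -> is_derive v x (dv x).
Hypothesis Hv : forall x, 0 <= x <= 1 -> 0 <= v x.

Section Pt.
Variable z : R.
Hypothesis Hz : 0 <= z <= 1.
Let Spos := SS_pos F1 A v HF1 HA Hv z Hz.
Let Ssq := SS_sq F1 A v HF1 HA Hv z Hz.
Let Sgv := SS_gt_v F1 A v HF1 HA Hv z Hz.
Let vpos := Hv z Hz.

Lemma taud_eq : taud F1 A v dv z = - gg F1 A v dv z / SS F1 A v z.
Proof. unfold taud, gg, Sd, tau. field. lra. Qed.

Lemma stretch_eq t : Sd F1 A v dv z * (t - tau F1 A v z) - taud F1 A v dv z * (SS F1 A v z + F2 * (t - tau F1 A v z))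
  = gg F1 A v dv z + cc F1 F2 A v dv z * (t - tau F1 A v z).
Proof. unfold cc, taud, gg, Sd, tau. field. lra. Qed.

Lemma cc_eq : cc F1 F2 A v dv z * (F1 * SS F1 A v z) = dv z * ((F1 - F2) * v z + F2 * SS F1 A v z) - F1 * (F1 - F2).
Proof. unfold cc, taud, Sd. field. lra. Qed.

Lemma gg_eq : gg F1 A v dv z * F1 = F1 + dv z * (SS F1 A v z - v z).
Proof. unfold gg, tau. field. lra. Qed.

Lemma cc_gg : 0 <= cc F1 F2 A v dv z -> 0 < gg F1 A v dv z.
Proof.
  intros Hc. pose proof cc_eq as E1. pose proof gg_eq as E2.
  set (S := SS F1 A v z) in *. set (C := cc F1 F2 A v dv z) in *. set (G := gg F1 A v dv z) in *.
  destruct (Rlt_le_dec 0 G) as [|HG]; auto. exfalso.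
  assert (0 <= C * (F1 * S)) by (apply Rmult_le_pos; nra).
  assert (HK : 0 <= (F1 - F2) * v z + F2 * S) by nra.
  assert (H1 : dv z * (S - v z) <= - F1) by nra.
  assert (H2 : 0 <= (S - v z) * (C * (F1 * S))) by (apply Rmult_le_pos; lra).
  assert (H3 : (dv z * (S - v z) + F1) * ((F1 - F2) * v z + F2 * S) <= 0).
  { apply Rmult_le_0_r; lra. }
  rewrite E1 in H2. assert (0 < F1 * F1 * S) by (apply Rmult_lt_0_compat; nra).
  assert (E3 : (S - v z) * (dv z * ((F1 - F2) * v z + F2 * S) - F1 * (F1 - F2)) - (dv z * (S - v z) + F1) * ((F1 - F2) * v z + F2 * S) = - (F1 * F1 * S)) by ring.
  lra.
Qed.

Lemma cond1_iff : (-2 * (A - z) * dv z < v z + SS F1 A v z) <-> 0 < gg F1 A v dv z.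
Proof.
  pose proof gg_eq as E. unfold DD in Ssq.
  assert (K : (SS F1 A v z + v z) * (gg F1 A v dv z * F1) = F1 * (v z + SS F1 A v z + 2 * (A - z) * dv z)).
  { rewrite E. replace ((SS F1 A v z + v z) * (F1 + dv z * (SS F1 A v z - v z))) with
      (F1 * (SS F1 A v z + v z) + dv z * (SS F1 A v z ^ 2 - v z ^ 2)) by ring. rewrite Ssq. ring. }
  split; intros H.
  - assert (0 < F1 * (v z + SS F1 A v z + 2 * (A - z) * dv z)) by (apply Rmult_lt_0_compat; lra).
    rewrite <- K in H0. 
    destruct (Rlt_le_dec 0 (gg F1 A v dv z)); auto.
    assert ((SS F1 A v z + v z) * (gg F1 A v dv z * F1) <= 0).
    { apply Rmult_le_0_l. lra. nra. } lra.
  - assert (0 < (SS F1 A v z + v z) * (gg F1 A v dv z * F1)) by (apply Rmult_lt_0_compat; nra).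
    rewrite K in H0. nra.
Qed.

Lemma cond2_iff : (dv z * ((F1 - F2) * v z + F2 * SS F1 A v z) >= F1 * (F1 - F2)) <-> 0 <= cc F1 F2 A v dv z.
Proof.
  pose proof cc_eq as E. split; intros H.
  - destruct (Rle_lt_dec 0 (cc F1 F2 A v dv z)); auto.
    assert (cc F1 F2 A v dv z * (F1 * SS F1 A v z) < 0).
    { apply Rmult_neg_pos; auto. apply Rmult_lt_0_compat; lra. } lra.
  - assert (0 <= cc F1 F2 A v dv z * (F1 * SS F1 A v z)) by (apply Rmult_le_pos; nra). lra.
Qed.
End Pt.
End One.

End P5.
Import P5.

Module P6.

Lemma cR_plus (f g : R -> R) x : continuous f x -> continuous g x -> continuous (fun r => f r + g r) x.
Proof. intros. apply (continuous_plus f g); auto. Qed.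
Lemma cR_minus (f g : R -> R) x : continuous f x -> continuous g x -> continuous (fun r => f r - g r) x.
Proof. intros. apply (continuous_minus f g); auto. Qed.
Lemma cR_mult (f g : R -> R) x : continuous f x -> continuous g x -> continuous (fun r => f r * g r) x.
Proof. intros. apply (continuous_mult f g); auto. Qed.
Lemma cR_div2 (f : R -> R) x : continuous f x -> continuous (fun r => f r / 2) x.
Proof. intros. unfold Rdiv. apply (cR_mult f (fun _ => / 2)); auto. apply continuous_const. Qed.
Lemma cR_pow2 (f : R -> R) x : continuous f x -> continuous (fun r => f r ^ 2) x.
Proof. intros. apply (continuous_ext (fun r => f r * f r)). intros r; change (f r * f r = f r ^ 2); ring. apply cR_mult; auto. Qed.
Lemma cR_const (c : R) (x : R) : continuous (fun _ : R => c) x.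
Proof. apply continuous_const. Qed.
Lemma cR_id x : continuous (fun r : R => r) x.
Proof. apply continuous_id. Qed.
Lemma cR_min c x : continuous (fun r => Rmin r c) x.
Proof.
  apply (continuous_ext (fun r => (r + c - Rabs (r - c)) / 2)).
  { intros r. unfold Rmin, Rabs. destruct (Rle_dec r c); destruct (Rcase_abs (r - c)); lra. }
  apply cR_div2. apply cR_minus. apply cR_plus. apply cR_id. apply cR_const.
  apply (continuous_Rabs_comp (fun r => r - c)). apply cR_minus. apply cR_id. apply cR_const.
Qed.
Lemma cR_max c x : continuous (fun r => Rmax r c) x.
Proof.
  apply (continuous_ext (fun r => (r + c + Rabs (r - c)) / 2)).
  { intros r. unfold Rmax, Rabs. destruct (Rle_dec r c); destruct (Rcase_abs (r - c)); lra. }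
  apply cR_div2. apply cR_plus. apply cR_plus. apply cR_id. apply cR_const.
  apply (continuous_Rabs_comp (fun r => r - c)). apply cR_minus. apply cR_id. apply cR_const.
Qed.
Lemma cR_comp_min (g : R -> R) c x : (forall u, continuous g u) -> continuous (fun r => g (Rmin r c)) x.
Proof. intros. apply (continuous_comp (fun r => Rmin r c) g). apply cR_min. apply H. Qed.
Lemma cR_comp_max (g : R -> R) c x : (forall u, continuous g u) -> continuous (fun r => g (Rmax r c)) x.
Proof. intros. apply (continuous_comp (fun r => Rmax r c) g). apply cR_max. apply H. Qed.

Ltac cont_tac := repeat first [ apply cR_plus | apply cR_minus | apply cR_mult | apply cR_div2 | apply cR_pow2
  | apply cR_const | apply cR_id ].

Lemma deriv_small (f : R -> R) x0 l : is_derive f x0 l -> l < 0 -> 0 <= x0 <= 1 ->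
  exists p q, 0 <= p < q /\ q <= 1 /\ f q < f p.
Proof.
  intros Hd Hl Hx. apply is_derive_Reals in Hd.
  destruct (Hd (- l / 2) ltac:(lra)) as [delta Hdel].
  pose proof (cond_pos delta) as Hdp.
  destruct (Rlt_le_dec x0 1) as [Hx1|Hx1].
  - set (h := Rmin (delta / 2) (1 - x0)).
    assert (Hh1 : h <= delta / 2) by apply Rmin_l. assert (Hh2 : h <= 1 - x0) by apply Rmin_r.
    assert (Hh0 : 0 < h) by (apply Rmin_glb_lt; lra).
    specialize (Hdel h ltac:(lra) ltac:(rewrite Rabs_pos_eq; lra)).
    apply Rabs_def2 in Hdel. destruct Hdel as [H1 H2].
    exists x0, (x0 + h). split; [lra|]. split; [lra|].
    assert ((f (x0 + h) - f x0) / h < 0) by lra.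
    assert ((f (x0 + h) - f x0) / h * h < 0) by (apply Rmult_neg_pos; lra).
    replace ((f (x0 + h) - f x0) / h * h) with (f (x0 + h) - f x0) in H0 by (field; lra). lra.
  - set (h := - Rmin (delta / 2) 1).
    assert (Hh1 : - h <= delta / 2) by (unfold h; rewrite Ropp_involutive; apply Rmin_l).
    assert (Hh2 : - h <= 1) by (unfold h; rewrite Ropp_involutive; apply Rmin_r).
    assert (Hh0 : h < 0) by (unfold h; assert (0 < Rmin (delta / 2) 1) by (apply Rmin_glb_lt; lra); lra).
    specialize (Hdel h ltac:(lra) ltac:(rewrite Rabs_left; lra)).
    apply Rabs_def2 in Hdel. destruct Hdel as [H1 H2].
    exists (x0 + h), x0. split; [lra|]. split; [lra|].
    assert ((f (x0 + h) - f x0) / h < 0) by lra.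
    assert (0 < (f (x0 + h) - f x0) / h * h) by (apply Rmult_neg_neg; lra).
    replace ((f (x0 + h) - f x0) / h * h) with (f (x0 + h) - f x0) in H0 by (field; lra). lra.
Qed.

End P6.
Import P6.

Module P7.

Ltac ct := match goal with
 | |- continuous (fun _ => ?c) _ => apply cR_const
 | |- continuous (fun t => t) _ => apply cR_id
 | |- continuous (fun t => Rmin t _) _ => apply cR_min
 | |- continuous (fun t => Rmax t _) _ => apply cR_max
 | |- continuous (fun t => _ + _) _ => apply cR_plus; ct
 | |- continuous (fun t => _ - _) _ => apply cR_minus; ct
 | |- continuous (fun t => _ / 2) _ => apply cR_div2; ct
 | |- continuous (fun t => _ ^ 2) _ => apply cR_pow2; ct
 | |- continuous (fun t => _ * _) _ => apply cR_mult; ct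
 end.

Section One.
Variables (F1 F2 A : R) (v dv : R -> R).
Hypothesis HF1 : 0 < F1.
Hypothesis HF2 : 0 <= F2.
Hypothesis HA : 1 < A.
Hypothesis Hder : forall x, 0 <= x <= 1 -> is_derive v x (dv x).
Hypothesis Hv : forall x, 0 <= x <= 1 -> 0 <= v x.

Notation S := (SS F1 A v).
Notation ta := (tau F1 A v).
Notation g := (gg F1 A v dv).
Notation c := (cc F1 F2 A v dv).

Lemma cont_Yex z r : continuous (fun t => Yex F1 F2 A v t z) r.
Proof.
  unfold Yex, P1, P2. ct.
Qed.

Section NoColl.
Hypothesis Hc : forall z, 0 <= z <= 1 -> 0 <= c z.

Lemma tau_lt x x' : 0 <= x < x' -> x' <= 1 -> ta x' < ta x.
Proof.
  intros H1 H2.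
  assert (- ta x < - ta x'); [|lra].
  apply (incr_MVT (fun u => - ta u) (fun u => - taud F1 A v dv u)); [lra| |].
  - intros z Hz. apply (is_derive_opp (fun u => ta u)). apply deriv_tau; auto; lra.
  - intros z Hz. assert (Hz' : 0 <= z <= 1) by lra.
    rewrite taud_eq by auto. pose proof (cc_gg F1 F2 A v dv HF1 HF2 HA Hv z Hz' (Hc z Hz')).
    pose proof (SS_pos F1 A v HF1 HA Hv z Hz').
    assert (0 < g z / S z) by (apply Rdiv_lt_0_compat; auto). unfold Rdiv in *. lra.
Qed.

Lemma tau_le x x' : 0 <= x <= x' -> x' <= 1 -> ta x' <= ta x.
Proof. intros H1 H2. destruct (Req_dec x x'). subst; lra. left; apply tau_lt; lra. Qed.

Lemma order1 t x x' : 0 <= t -> 0 <= x < x' -> x' <= 1 -> Yex F1 F2 A v t x < Yex F1 F2 A v t x'.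
Proof.
  intros Ht H1 H2.
  pose proof (tau_lt x x' H1 H2) as Hlt.
  destruct (Rle_dec t (ta x')) as [Ha|Ha].
  { rewrite !Yex_ph1 by (auto; lra).
    apply (incr_MVT (fun u => P1 F1 v t u) (fun u => 1 + dv u * t)); [lra| |].
    - intros z Hz. apply deriv_P1; auto; lra.
    - intros z Hz. assert (Hz' : 0 <= z <= 1) by lra.
      pose proof (tau_le z x' ltac:(lra) H2).
      pose proof (cc_gg F1 F2 A v dv HF1 HF2 HA Hv z Hz' (Hc z Hz')). unfold gg in H0.
      destruct (Rle_lt_dec 0 (dv z)); nra. }
  destruct (Rle_dec (ta x) t) as [Hb|Hb].
  { rewrite !Yex_ph2 by (auto; lra).
    apply (incr_MVT (fun u => P2 F1 F2 A v t u)
      (fun u => Sd F1 A v dv u * (t - ta u) - taud F1 A v dv u * (S u + F2 * (t - ta u)))); [lra| |].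
    - intros z Hz. apply deriv_P2; auto; lra.
    - intros z Hz. assert (Hz' : 0 <= z <= 1) by lra.
      rewrite stretch_eq by auto.
      pose proof (tau_le x z ltac:(lra) ltac:(lra)).
      pose proof (cc_gg F1 F2 A v dv HF1 HF2 HA Hv z Hz' (Hc z Hz')).
      pose proof (Hc z Hz'). nra. }
  rewrite Yex_ph1 by (auto; lra). rewrite (Yex_ph2 F1 F2 A v HF1 HA Hv x') by (auto; lra).
  pose proof (P1_lt F1 A v HF1 HA Hv x ltac:(lra) t ltac:(lra)).
  pose proof (P2_gt F1 F2 A v HF1 HF2 HA Hv x' ltac:(lra) t ltac:(lra)). lra.
Qed.
End NoColl.

Definition Tmax := 1 + 4 * A ^ 2 / (2 * F1 * (A - 1)).

Lemma tau_bound z : 0 <= z <= 1 -> ta z <= Tmax.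
Proof.
  intros Hz. pose proof (SS_sq F1 A v HF1 HA Hv z Hz) as Sq. pose proof (SS_pos F1 A v HF1 HA Hv z Hz).
  pose proof (SS_gt_v F1 A v HF1 HA Hv z Hz). pose proof (Hv z Hz).
  pose proof (tau_pos F1 A v HF1 HA Hv z Hz).
  unfold DD in Sq.
  assert (E : ta z * (S z + v z) = 2 * (A - z)).
  { unfold tau. apply Rmult_eq_reg_r with F1; [|lra].
    replace ((S z - v z) / F1 * (S z + v z) * F1) with (S z ^ 2 - v z ^ 2) by (field; lra). rewrite Sq. ring. }
  assert (E2 : (ta z) ^ 2 * (S z) ^ 2 <= 4 * A ^ 2).
  { assert ((ta z * S z) ^ 2 <= (ta z * (S z + v z)) ^ 2).
    { apply pow_incr. split. nra. nra. }
    rewrite E in H3. nra. }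
  assert (E3 : ta z ^ 2 * (2 * F1 * (A - 1)) <= 4 * A ^ 2).
  { assert (2 * F1 * (A - 1) <= S z ^ 2) by nra. 
    assert (0 <= ta z ^ 2) by nra. nra. }
  unfold Tmax.
  assert (ta z ^ 2 <= 4 * A ^ 2 / (2 * F1 * (A - 1))).
  { apply Rmult_le_reg_r with (2 * F1 * (A - 1)). nra. 
    replace (4 * A ^ 2 / (2 * F1 * (A - 1)) * (2 * F1 * (A - 1))) with (4 * A ^ 2) by (field; lra). lra. }
  nra.
Qed.

Lemma collision1 x0 : 0 <= x0 <= 1 -> c x0 < 0 ->
  exists t p q, 0 <= t /\ 0 <= p < q /\ q <= 1 /\ Yex F1 F2 A v t p = Yex F1 F2 A v t q.
Proof.
  intros Hx Hc.
  set (t := Tmax + ta x0 + (Rabs (g x0) + 1) / (- c x0)).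
  assert (Ht1 : forall z, 0 <= z <= 1 -> ta z <= t).
  { intros z Hz. pose proof (tau_bound z Hz). pose proof (tau_pos F1 A v HF1 HA Hv x0 Hx).
    assert (0 <= (Rabs (g x0) + 1) / (- c x0)) by (apply Rlt_le, Rdiv_lt_0_compat; [pose proof (Rabs_pos (g x0)) |]; lra).
    unfold t. lra. }
  assert (Hst : g x0 + c x0 * (t - ta x0) < 0).
  { replace (t - ta x0) with (Tmax + (Rabs (g x0) + 1) / (- c x0)) by (unfold t; ring).
    assert (0 <= Tmax). { unfold Tmax. assert (0 < 2 * F1 * (A - 1)) by nra. assert (0 < 4 * A ^ 2 / (2 * F1 * (A - 1))) by (apply Rdiv_lt_0_compat; nra). lra. }
    replace (c x0 * (Tmax + (Rabs (g x0) + 1) / - c x0)) with (c x0 * Tmax - (Rabs (g x0) + 1)) by (field; lra).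
    pose proof (Rle_abs (g x0)). nra. }
  assert (Hd := deriv_P2 F1 F2 A v dv HF1 HA Hder Hv x0 Hx t).
  rewrite stretch_eq in Hd by auto.
  destruct (deriv_small _ _ _ Hd Hst Hx) as [p [q [Hpq [Hq Hf]]]].
  assert (Hp1 : 0 <= p <= 1) by lra. assert (Hq1 : 0 <= q <= 1) by lra.
  set (G := fun r => Yex F1 F2 A v r p - Yex F1 F2 A v r q).
  assert (HG : continuity G).
  { intro r. apply continuity_pt_filterlim. unfold G. apply (cR_minus (fun r => Yex F1 F2 A v r p) (fun r => Yex F1 F2 A v r q)); apply cont_Yex. }
  assert (G0 : G 0 < 0).
  { unfold G. rewrite !Yex_ph1; auto. unfold P1. lra. 
    all: apply Rlt_le, tau_pos; auto. }
  assert (Gt : 0 < G t).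
  { unfold G. rewrite !Yex_ph2; auto. lra. }
  assert (Ht0 : 0 < t). { pose proof (tau_pos F1 A v HF1 HA Hv x0 Hx). pose proof (Ht1 x0 Hx). lra. }
  destruct (IVT G 0 t HG Ht0 G0 Gt) as [r [Hr Er]].
  exists r, p, q. split. lra. split. lra. split. lra. unfold G in Er. lra.
Qed.
End One.

End P7.
Import P7.

Module P8.

Lemma part1b (F1 F2 A : R) : 0 < F1 -> 0 <= F2 -> 1 < A ->
    (forall v dv : R -> R,
       (forall x, 0 <= x <= 1 -> is_derive v x (dv x)) ->
       (forall x, 0 <= x <= 1 -> continuous dv x) ->
       (forall x, 0 <= x <= 1 -> 0 <= v x) ->
       forall y : R -> R -> R,
         is_trajectory (F_one_gap F1 F2 A) v y ->
         (no_collisions y <->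
          (forall x, 0 <= x <= 1 ->
             -2 * (A - x) * dv x < v x + sqrt (Dfun F1 A v x) /\
             dv x * ((F1 - F2) * v x + F2 * sqrt (Dfun F1 A v x)) >= F1 * (F1 - F2)))).
Proof.
  intros HF1 HF2 HA v dv Hder _ Hv y Hy.
  pose proof (traj1 F1 F2 A v HF1 HF2 HA Hv y Hy) as Ty.
  change (no_collisions y <->
          (forall x, 0 <= x <= 1 ->
             -2 * (A - x) * dv x < v x + SS F1 A v x /\
             dv x * ((F1 - F2) * v x + F2 * SS F1 A v x) >= F1 * (F1 - F2))).
  split.
  - intros NC x Hx.
    assert (Hc : 0 <= cc F1 F2 A v dv x).
    { destruct (Rle_lt_dec 0 (cc F1 F2 A v dv x)) as [|Hlt]; auto. exfalso.
      destruct (collision1 F1 F2 A v dv HF1 HA Hder Hv x Hx Hlt) as [t [p [q [Ht [Hp [Hq E]]]]]].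
      apply (NC t Ht p q ltac:(lra) ltac:(lra) ltac:(lra)).
      rewrite !Ty by (auto; lra). auto. }
    split.
    + apply cond1_iff; auto. apply (cc_gg F1 F2 A v dv HF1 HF2 HA Hv x Hx Hc).
    + apply cond2_iff; auto.
  - intros Hcond t Ht x x' Hx Hx' Hne.
    assert (Hc : forall z, 0 <= z <= 1 -> 0 <= cc F1 F2 A v dv z).
    { intros z Hz. apply (cond2_iff F1 F2 A v dv HF1 HA Hv z Hz). apply Hcond; auto. }
    rewrite !Ty by auto.
    destruct (Rlt_le_dec x x') as [Hl|Hl].
    + pose proof (order1 F1 F2 A v dv HF1 HF2 HA Hder Hv Hc t x x' Ht ltac:(lra) ltac:(lra)). lra.
    + pose proof (order1 F1 F2 A v dv HF1 HF2 HA Hder Hv Hc t x' x Ht ltac:(lra) ltac:(lra)). lra.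
Qed.

Lemma part1a (F1 F2 A : R) : 0 < F1 -> 0 <= F2 -> 1 < A ->
    (forall y : R -> R -> R,
       is_trajectory (F_one_gap F1 F2 A) (fun _ => 0) y ->
       (no_collisions y <-> F2 >= F1)).
Proof.
  intros HF1 HF2 HA y Hy.
  rewrite (part1b F1 F2 A HF1 HF2 HA (fun _ => 0) (fun _ => 0)); auto.
  - split.
    + intros H. destruct (H 0 ltac:(lra)) as [_ H2]. nra.
    + intros H x Hx. split.
      * assert (0 < sqrt (Dfun F1 A (fun _ => 0) x)).
        { apply sqrt_lt_R0. unfold Dfun. nra. } lra.
      * nra.
  - intros. apply (@is_derive_const R_AbsRing R_NormedModule 0 x).
  - intros. apply continuous_const.
  - intros. lra.
Qed.

End P8.
Import P8.

Module Q1.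

Set Default Proof Using "All".
Section Two.
Variables (F1 F2 F3 A B : R).
Hypothesis HF2 : 0 < F2.
Hypothesis HF12 : F2 < F1.
Hypothesis HF23 : F2 < F3.
Hypothesis HA : 1 < A.
Hypothesis HAB : A < B.

Definition u1 z := sqrt (2 * F1 * (A - z)).
Definition u2 z := sqrt (2 * F1 * (A - z) + 2 * F2 * (B - A)).
Definition t1 z := u1 z / F1.
Definition t2 z := t1 z + (u2 z - u1 z) / F2.
Definition Q1 t z := z + F1 * t ^ 2 / 2.
Definition Q2 t z := A + u1 z * (t - t1 z) + F2 * (t - t1 z) ^ 2 / 2.
Definition Q3 t z := B + u2 z * (t - t2 z) + F3 * (t - t2 z) ^ 2 / 2.
Definition Yex2 t z := Q1 (Rmin t (t1 z)) z + (Q2 (Rmax (Rmin t (t2 z)) (t1 z)) z - A) + (Q3 (Rmax t (t2 z)) z - B).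

Section Pt.
Variable z : R.
Hypothesis Hz : 0 <= z <= 1.

Lemma u1_sq : u1 z ^ 2 = 2 * F1 * (A - z).
Proof. unfold u1. simpl. rewrite Rmult_1_r. apply sqrt_sqrt. nra. Qed.
Lemma u2_sq : u2 z ^ 2 = 2 * F1 * (A - z) + 2 * F2 * (B - A).
Proof. unfold u2. simpl. rewrite Rmult_1_r. apply sqrt_sqrt. nra. Qed.
Lemma u1_pos : 0 < u1 z.
Proof. unfold u1. apply sqrt_lt_R0. nra. Qed.
Lemma u2_gt : u1 z < u2 z.
Proof. unfold u1, u2. apply sqrt_lt_1; nra. Qed.
Lemma t1_pos : 0 < t1 z.
Proof. unfold t1. pose proof u1_pos. apply Rdiv_lt_0_compat; lra. Qed.
Lemma t12 : t1 z < t2 z.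
Proof. unfold t2. pose proof u2_gt. assert (0 < (u2 z - u1 z) / F2) by (apply Rdiv_lt_0_compat; lra). lra. Qed.
Lemma Q1_t1 : Q1 (t1 z) z = A.
Proof. pose proof u1_sq. unfold Q1, t1. field_simplify; [|lra]. rewrite H. field. lra. Qed.
Lemma Q2_t1 : Q2 (t1 z) z = A.
Proof. unfold Q2. rewrite Rminus_diag. field. Qed.
Lemma Q2_t2 : Q2 (t2 z) z = B.
Proof.
  pose proof u1_sq. pose proof u2_sq. unfold Q2, t2.
  replace (t1 z + (u2 z - u1 z) / F2 - t1 z) with ((u2 z - u1 z) / F2) by ring.
  apply Rmult_eq_reg_r with (2 * F2); [|lra].
  field_simplify; [|lra].
  replace (u2 z ^ 2) with (2 * F1 * (A - z) + 2 * F2 * (B - A)). replace (u1 z ^ 2) with (2 * F1 * (A - z)).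
  field. Qed.
Lemma Q3_t2 : Q3 (t2 z) z = B.
Proof. unfold Q3. rewrite Rminus_diag. field. Qed.
Lemma vel1 : F1 * t1 z = u1 z.
Proof. unfold t1. field. lra. Qed.
Lemma vel2 : u1 z + F2 * (t2 z - t1 z) = u2 z.
Proof. unfold t2. field. lra. Qed.

Lemma Y2_ph1 t : t <= t1 z -> Yex2 t z = Q1 t z.
Proof.
  intros H. pose proof t12. unfold Yex2. rewrite Rmin_left by lra. rewrite (Rmin_left t) by lra.
  rewrite Rmax_right by lra. rewrite (Rmax_right t) by lra. rewrite Q2_t1, Q3_t2. field.
Qed.
Lemma Y2_ph2 t : t1 z <= t <= t2 z -> Yex2 t z = Q2 t z.
Proof.
  intros H. unfold Yex2. rewrite Rmin_right by lra. rewrite (Rmin_left t) by lra.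
  rewrite Rmax_left by lra. rewrite (Rmax_right t) by lra. rewrite Q1_t1, Q3_t2. field.
Qed.
Lemma Y2_ph3 t : t2 z <= t -> Yex2 t z = Q3 t z.
Proof.
  intros H. pose proof t12. unfold Yex2. rewrite Rmin_right by lra. rewrite (Rmin_right t) by lra.
  rewrite Rmax_left by lra. rewrite (Rmax_left t) by lra. rewrite Q1_t1, Q2_t2. field.
Qed.

Lemma Q1_lt s : 0 <= s < t1 z -> Q1 s z < A.
Proof.
  intros H. rewrite <- Q1_t1. unfold Q1. pose proof t1_pos.
  assert (0 < (t1 z - s) * (t1 z + s)) by (apply Rmult_lt_0_compat; lra). nra.
Qed.
Lemma Q2_lt s : t1 z <= s < t2 z -> Q2 s z < B.
Proof.
  intros H. rewrite <- Q2_t2. unfold Q2. pose proof u1_pos.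
  assert (0 < (t2 z - s) * (u1 z + F2 * ((t2 z - t1 z) + (s - t1 z)) / 2)) by (apply Rmult_lt_0_compat; nra).
  nra.
Qed.
Lemma Q2_gt s : t1 z < s -> A < Q2 s z.
Proof.
  intros H. unfold Q2. pose proof u1_pos.
  assert (0 < u1 z * (s - t1 z)) by (apply Rmult_lt_0_compat; lra).
  assert (0 <= F2 * (s - t1 z) ^ 2 / 2) by (assert (0 <= (s - t1 z)^2) by nra; nra). lra.
Qed.
Lemma Q3_mono s t : t2 z <= s <= t -> Q3 s z <= Q3 t z.
Proof.
  intros H. unfold Q3. pose proof u1_pos. pose proof u2_gt.
  assert (0 <= (t - s) * (u2 z + F3 * ((t - t2 z) + (s - t2 z)) / 2)) by (apply Rmult_le_pos; nra).
  nra.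
Qed.
Lemma Q3_gt s : t2 z < s -> B < Q3 s z.
Proof.
  intros H. unfold Q3. pose proof u1_pos. pose proof u2_gt.
  assert (0 < u2 z * (s - t2 z)) by (apply Rmult_lt_0_compat; lra).
  assert (0 <= F3 * (s - t2 z) ^ 2 / 2) by (assert (0 <= (s - t2 z)^2) by nra; nra). lra.
Qed.
End Pt.

Lemma traj2 (y : R -> R -> R) : is_trajectory (F_two_gaps F1 F2 F3 A B) (fun _ => 0) y ->
  forall x, 0 <= x <= 1 -> forall t, 0 <= t -> y t x = Yex2 t x.
Proof.
  intros [w Hw] x Hx t Ht.
  set (F := F_two_gaps F1 F2 F3 A B).
  set (Y := fun s => y s x). set (W := fun s => w s x).
  assert (HT : traj_rel F 0 x Y W) by (intros s Hs; apply Hw; auto).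
  assert (HF : forall z, 0 <= F z <= F1 + F2 + F3)
    by (intros z; unfold F, F_two_gaps; destruct Rlt_dec; [|destruct Rlt_dec]; lra).
  assert (H0 : 0 <= 0) by lra.
  assert (Y0 : Y 0 = x). { pose proof (RInt_pt0 _ _ _ (proj2 (HT 0 (Rle_refl 0)))). lra. }
  assert (W0 : W 0 = 0). { pose proof (RInt_pt0 _ _ _ (proj1 (HT 0 (Rle_refl 0)))). lra. }
  pose proof (t1_pos x Hx) as Htp. pose proof (t12 x Hx) as Ht12.
  assert (Ph1 := phase F (F1 + F2 + F3) 0 x Y W HF H0 HT 0 (t1 x) F1 A ltac:(lra) ltac:(lra)).
  assert (C11 : forall r, 0 <= r -> Y r < A -> F (Y r) = F1).
  { intros r _ Hr. unfold F, F_two_gaps. destruct Rlt_dec. auto. contradiction. }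
  assert (C12 : forall s, 0 <= s < t1 x -> Y 0 + W 0 * (s - 0) + F1 * (s - 0) ^ 2 / 2 < A).
  { intros s Hs. rewrite Y0, W0. pose proof (Q1_lt x Hx s Hs). unfold Q1 in *.
    replace (s - 0) with s by ring. lra. }
  assert (Ph1' : forall s, 0 <= s <= t1 x -> W s = F1 * s /\ Y s = Q1 s x).
  { intros s Hs. destruct (Ph1 C11 C12 s Hs) as [E1 E2].
    rewrite W0 in E1. rewrite Y0, W0 in E2. unfold Q1. split. rewrite E1. ring. rewrite E2. field. }
  destruct (Rle_dec t (t1 x)) as [Hle|Hgt].
  { rewrite Y2_ph1 by auto. apply Ph1'. lra. }
  destruct (Ph1' (t1 x) ltac:(lra)) as [Wt1 Yt1].
  rewrite Q1_t1 in Yt1 by auto. rewrite vel1 in Wt1 by auto.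
  assert (Ph2 := phase F (F1 + F2 + F3) 0 x Y W HF H0 HT (t1 x) (t2 x) F2 B ltac:(lra) ltac:(lra)).
  assert (C21 : forall r, t1 x <= r -> Y r < B -> F (Y r) = F2).
  { intros r Hr HrB. pose proof (Y_mono F (F1+F2+F3) 0 x Y W HF H0 HT (t1 x) r ltac:(lra)).
    unfold F, F_two_gaps. destruct Rlt_dec. lra. destruct Rlt_dec. auto. contradiction. }
  assert (C22 : forall s, t1 x <= s < t2 x -> Y (t1 x) + W (t1 x) * (s - t1 x) + F2 * (s - t1 x) ^ 2 / 2 < B).
  { intros s Hs. rewrite Yt1, Wt1. pose proof (Q2_lt x Hx s Hs). unfold Q2 in *. lra. }
  destruct (Rle_dec t (t2 x)) as [Hle2|Hgt2].
  { rewrite Y2_ph2 by (auto; lra). destruct (Ph2 C21 C22 t ltac:(lra)) as [_ E].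
    change (Y t = Q2 t x). rewrite E, Yt1, Wt1. unfold Q2. reflexivity. }
  destruct (Ph2 C21 C22 (t2 x) ltac:(lra)) as [Wt2 Yt2].
  rewrite Yt1, Wt1 in Yt2. rewrite Wt1 in Wt2.
  change (Y (t2 x) = Q2 (t2 x) x) in Yt2. rewrite Q2_t2 in Yt2 by auto.
  rewrite vel2 in Wt2 by auto.
  rewrite Y2_ph3 by (auto; lra).
  pose proof (Q3_mono x Hx). pose proof (Q3_gt x Hx t ltac:(lra)).
  assert (Ph3 := phase F (F1 + F2 + F3) 0 x Y W HF H0 HT (t2 x) t F3 (Q3 t x + 1) ltac:(lra) ltac:(lra)).
  assert (C31 : forall r, t2 x <= r -> Y r < Q3 t x + 1 -> F (Y r) = F3).
  { intros r Hr _. pose proof (Y_mono F (F1+F2+F3) 0 x Y W HF H0 HT (t2 x) r ltac:(lra)).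
    unfold F, F_two_gaps. destruct Rlt_dec. lra. destruct Rlt_dec. lra. auto. }
  assert (C32 : forall s, t2 x <= s < t -> Y (t2 x) + W (t2 x) * (s - t2 x) + F3 * (s - t2 x) ^ 2 / 2 < Q3 t x + 1).
  { intros s Hs. rewrite Yt2, Wt2. pose proof (H s t ltac:(lra)). unfold Q3 in *. lra. }
  destruct (Ph3 C31 C32 t ltac:(lra)) as [_ E].
  change (Y t = Q3 t x). rewrite E, Yt2, Wt2. unfold Q3. reflexivity.
Qed.
End Two.

End Q1.
Import Q1.

Module Q2.

Set Default Proof Using "All".
Section Two.
Variables (F1 F2 F3 A B : R).
Hypothesis HF2 : 0 < F2.
Hypothesis HF12 : F2 < F1.
Hypothesis HF23 : F2 < F3.
Hypothesis HA : 1 < A.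
Hypothesis HAB : A < B.

Notation u1 := (u1 F1 A).
Notation u2 := (u2 F1 F2 A B).
Notation t1 := (t1 F1 A).
Notation t2 := (t2 F1 F2 A B).

Definition u1d z := - F1 / u1 z.
Definition u2d z := - F1 / u2 z.
Definition t1d z := u1d z / F1.
Definition t2d z := t1d z + (u2d z - u1d z) / F2.
Definition c2 z := u1d z - F2 * t1d z.
Definition g2 z := - t2d z * u2 z.
Definition c3 z := u2d z - F3 * t2d z.

Section Pt.
Variable z : R.
Hypothesis Hz : 0 <= z <= 1.
Let U1 := u1_pos F1 F2 F3 A B HF2 HF12 HF23 HA HAB z Hz.
Let U12 := u2_gt F1 F2 F3 A B HF2 HF12 HF23 HA HAB z Hz.

Ltac fin := 
  match goal with |- ?a = ?b => change (@eq R a b) end;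
  try change (sqrt (2 * F1 * (A + - z) + 2 * F2 * (B - A))) with (u2 z);
  try change (sqrt (2 * F1 * (A + - z))) with (u1 z);
  try change (sqrt (2 * F1 * (A - z) + 2 * F2 * (B - A))) with (u2 z);
  try change (sqrt (2 * F1 * (A - z))) with (u1 z);
  unfold t2d, t1d, u1d, u2d; field; repeat split; lra.
Ltac side := repeat split; nra.

Lemma dQ1 t : is_derive (fun u => Q1 F1 t u) z 1.
Proof. unfold Q1. auto_derive; auto; ring. Qed.

Lemma dt1 : is_derive (fun u => t1 u) z (t1d z).
Proof. unfold Q1.t1, Q1.u1. auto_derive. side. fin. Qed.

Lemma dt2 : is_derive (fun u => t2 u) z (t2d z).
Proof. unfold Q1.t2, Q1.t1, Q1.u2, Q1.u1. auto_derive. side. fin. Qed.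

Lemma dQ2 t : is_derive (fun u => Q2 F1 F2 A t u) z (u1d z * (t - t1 z) - t1d z * (u1 z + F2 * (t - t1 z))).
Proof. unfold Q2, Q1.t1, Q1.u1. auto_derive. side. fin. Qed.

Lemma dQ3 t : is_derive (fun u => Q3 F1 F2 F3 A B t u) z (u2d z * (t - t2 z) - t2d z * (u2 z + F3 * (t - t2 z))).
Proof. unfold Q3, Q1.t2, Q1.t1, Q1.u2, Q1.u1. auto_derive. side. fin. Qed.

Lemma dQ2_eq t : u1d z * (t - t1 z) - t1d z * (u1 z + F2 * (t - t1 z)) = 1 + c2 z * (t - t1 z).
Proof. unfold c2. unfold t1d, u1d. field. split; lra. Qed.

Lemma dQ3_eq t : u2d z * (t - t2 z) - t2d z * (u2 z + F3 * (t - t2 z)) = g2 z + c3 z * (t - t2 z).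
Proof. unfold g2, c3. ring. Qed.

Lemma g2_c2 : g2 z = 1 + c2 z * (t2 z - t1 z).
Proof. unfold g2, c2, t2d, t1d, u1d, u2d, Q1.t2, Q1.t1. field. repeat split; lra. Qed.

Lemma c2_neg : c2 z < 0.
Proof.
  unfold c2, t1d, u1d. replace (- F1 / u1 z - F2 * (- F1 / u1 z / F1)) with (- (F1 - F2) / u1 z) by (field; split; lra).
  assert (0 < (F1 - F2) / u1 z) by (apply Rdiv_lt_0_compat; lra). unfold Rdiv in *. lra.
Qed.

Lemma t1d_neg : t1d z < 0.
Proof.
  unfold t1d, u1d. replace (- F1 / u1 z / F1) with (- (1 / u1 z)) by (field; split; lra).
  assert (0 < 1 / u1 z) by (apply Rdiv_lt_0_compat; lra). lra.
Qed.

Lemma t2d_eq : t2d z = - g2 z / u2 z.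
Proof. unfold g2. field. lra. Qed.

Lemma g2_poly : g2 z * (F2 * u1 z) = F1 * u1 z - (F1 - F2) * u2 z.
Proof. unfold g2, t2d, t1d, u1d, u2d. field. repeat split; lra. Qed.

Lemma c3_poly : c3 z * (F2 * u1 z * u2 z) = F1 * (F3 - F2) * u1 z - F3 * (F1 - F2) * u2 z.
Proof. unfold c3, t2d, t1d, u1d, u2d. field. repeat split; lra. Qed.

Lemma c3_iff : 0 <= c3 z <-> B - A <= alpha F1 F2 F3 * (A - z).
Proof.
  pose proof c3_poly as E. pose proof (u1_sq F1 F2 F3 A B HF2 HF12 HF23 HA HAB z Hz) as S1.
  pose proof (u2_sq F1 F2 F3 A B HF2 HF12 HF23 HA HAB z Hz) as S2.
  set (L := F1 * (F3 - F2) * u1 z). set (Rr := F3 * (F1 - F2) * u2 z).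
  assert (HL : 0 < L) by (unfold L; apply Rmult_lt_0_compat; [apply Rmult_lt_0_compat|]; lra).
  assert (HR : 0 < Rr) by (unfold Rr; apply Rmult_lt_0_compat; [apply Rmult_lt_0_compat|]; lra).
  assert (K : L ^ 2 - Rr ^ 2 = 2 * F2 * (F1 - F2) ^ 2 * F3 ^ 2 * (alpha F1 F2 F3 * (A - z) - (B - A))).
  { unfold L, Rr. replace ((F1 * (F3 - F2) * u1 z) ^ 2) with (F1 ^ 2 * (F3 - F2) ^ 2 * u1 z ^ 2) by ring.
    replace ((F3 * (F1 - F2) * u2 z) ^ 2) with (F3 ^ 2 * (F1 - F2) ^ 2 * u2 z ^ 2) by ring.
    rewrite S1, S2. unfold alpha. field. split; lra. }
  assert (Hpos : 0 < 2 * F2 * (F1 - F2) ^ 2 * F3 ^ 2).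
  { assert (0 < (F1 - F2) ^ 2) by (apply pow_lt; lra). assert (0 < F3 ^ 2) by (apply pow_lt; lra).
    apply Rmult_lt_0_compat; [apply Rmult_lt_0_compat|]; lra. }
  assert (Hden : 0 < F2 * u1 z * u2 z) by (apply Rmult_lt_0_compat; [apply Rmult_lt_0_compat|]; lra).
  split; intros H.
  - assert (Rr <= L). { assert (0 <= c3 z * (F2 * u1 z * u2 z)) by (apply Rmult_le_pos; lra). unfold L, Rr in *. lra. }
    assert (0 <= L ^ 2 - Rr ^ 2) by nra.
    rewrite K in H1.
    destruct (Rle_lt_dec (B - A) (alpha F1 F2 F3 * (A - z))); auto.
    assert (2 * F2 * (F1 - F2) ^ 2 * F3 ^ 2 * (alpha F1 F2 F3 * (A - z) - (B - A)) < 0)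
      by (apply Rmult_pos_neg; lra). lra.
  - assert (0 <= L ^ 2 - Rr ^ 2) by (rewrite K; apply Rmult_le_pos; lra).
    assert (Rr <= L) by nra.
    destruct (Rle_lt_dec 0 (c3 z)); auto.
    assert (c3 z * (F2 * u1 z * u2 z) < 0) by (apply Rmult_neg_pos; lra).
    unfold L, Rr in *. lra.
Qed.

Lemma g2_pos : 0 <= c3 z -> 0 < g2 z.
Proof.
  intros H. pose proof c3_poly as E. pose proof g2_poly as G.
  assert (Hden : 0 < F2 * u1 z * u2 z) by (apply Rmult_lt_0_compat; [apply Rmult_lt_0_compat|]; lra).
  assert (0 <= c3 z * (F2 * u1 z * u2 z)) by (apply Rmult_le_pos; lra).
  assert (F3 * (F1 - F2) * u2 z <= F1 * (F3 - F2) * u1 z) by lra.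
  assert (F3 * ((F1 - F2) * u2 z) < F3 * (F1 * u1 z)) by nra.
  assert ((F1 - F2) * u2 z < F1 * u1 z) by (apply Rmult_lt_reg_l with F3; lra).
  destruct (Rlt_le_dec 0 (g2 z)); auto.
  assert (g2 z * (F2 * u1 z) <= 0) by (apply Rmult_le_0_r; nra). lra.
Qed.
End Pt.
End Two.

End Q2.
Import Q2.

Module Q3.

Ltac ct := match goal with
 | |- continuous (fun _ => ?c) _ => apply cR_const
 | |- continuous (fun t => t) _ => apply cR_id
 | |- continuous (fun t => Rmin t _) _ => apply cR_min
 | |- continuous (fun t => Rmax t _) _ => apply cR_max
 | |- continuous (fun t => Rmax (Rmin t ?a) ?b) _ =>
     apply (continuous_comp (fun r => Rmin r a) (fun r => Rmax r b)); [apply cR_min | apply cR_max]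
 | |- continuous (fun t => _ + _) _ => apply cR_plus; ct
 | |- continuous (fun t => _ - _) _ => apply cR_minus; ct
 | |- continuous (fun t => _ / 2) _ => apply cR_div2; ct
 | |- continuous (fun t => _ ^ 2) _ => apply cR_pow2; ct
 | |- continuous (fun t => _ * _) _ => apply cR_mult; ct
 end.

Set Default Proof Using "All".
Section Two.
Variables (F1 F2 F3 A B : R).
Hypothesis HF2 : 0 < F2.
Hypothesis HF12 : F2 < F1.
Hypothesis HF23 : F2 < F3.
Hypothesis HA : 1 < A.
Hypothesis HAB : A < B.

Notation u1 := (Q1.u1 F1 A).
Notation u2 := (Q1.u2 F1 F2 A B).
Notation t1 := (Q1.t1 F1 A).
Notation t2 := (Q1.t2 F1 F2 A B).
Notation Y := (Yex2 F1 F2 F3 A B).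
Notation c3 := (Q2.c3 F1 F2 F3 A B).
Notation g2 := (Q2.g2 F1 F2 A B).
Notation c2 := (Q2.c2 F1 F2 A).

Ltac P L := let H := fresh in pose proof (L F1 F2 F3 A B HF2 HF12 HF23 HA HAB) as H; simpl in H.

Lemma cont_Y2 z r : continuous (fun t => Y t z) r.
Proof. unfold Yex2, Q1.Q1, Q1.Q2, Q1.Q3. ct. Qed.

Lemma t1_lt x x' : 0 <= x < x' -> x' <= 1 -> t1 x' < t1 x.
Proof.
  intros H1 H2. assert (- t1 x < - t1 x'); [|lra].
  apply (incr_MVT (fun u => - t1 u) (fun u => - t1d F1 A u)); [lra| |].
  - intros z Hz. apply (is_derive_opp (fun u => t1 u)). apply (dt1 F1 F2 F3 A B HF2 HF12 HF23 HA HAB z ltac:(lra)).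
  - intros z Hz. pose proof (t1d_neg F1 F2 F3 A B HF2 HF12 HF23 HA HAB z ltac:(lra)). lra.
Qed.

Lemma Y_le_A z t : 0 <= z <= 1 -> 0 <= t <= t1 z -> Y t z <= A.
Proof.
  intros Hz Ht. rewrite Y2_ph1 by (auto; lra).
  destruct (Req_dec t (t1 z)). subst. rewrite (Q1_t1 F1 F2 F3 A B HF2 HF12 HF23 HA HAB z Hz); lra.
  left. apply (Q1_lt F1 F2 F3 A B HF2 HF12 HF23 HA HAB z Hz). lra.
Qed.

Lemma Y_gt_A z t : 0 <= z <= 1 -> t1 z < t -> A < Y t z.
Proof.
  intros Hz Ht. destruct (Rle_dec t (t2 z)).
  - rewrite Y2_ph2 by (auto; lra). apply (Q2_gt F1 F2 F3 A B HF2 HF12 HF23 HA HAB z Hz); auto.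
  - rewrite Y2_ph3 by (auto; lra). pose proof (Q3_gt F1 F2 F3 A B HF2 HF12 HF23 HA HAB z Hz t ltac:(lra)). lra.
Qed.

Lemma Y_le_B z t : 0 <= z <= 1 -> 0 <= t <= t2 z -> Y t z <= B.
Proof.
  intros Hz Ht. destruct (Rle_dec t (t1 z)).
  - pose proof (Y_le_A z t Hz ltac:(lra)). lra.
  - rewrite Y2_ph2 by (auto; lra). destruct (Req_dec t (t2 z)). subst. rewrite (Q2_t2 F1 F2 F3 A B HF2 HF12 HF23 HA HAB z Hz); lra.
    left. apply (Q2_lt F1 F2 F3 A B HF2 HF12 HF23 HA HAB z Hz). lra.
Qed.

Lemma Y_gt_B z t : 0 <= z <= 1 -> t2 z < t -> B < Y t z.
Proof. intros Hz Ht. rewrite Y2_ph3 by (auto; lra). apply (Q3_gt F1 F2 F3 A B HF2 HF12 HF23 HA HAB z Hz); auto. Qed.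

Section NoColl.
Hypothesis Hc : forall z, 0 <= z <= 1 -> 0 <= c3 z.

Lemma t2_lt x x' : 0 <= x < x' -> x' <= 1 -> t2 x' < t2 x.
Proof.
  intros H1 H2. assert (- t2 x < - t2 x'); [|lra].
  apply (incr_MVT (fun u => - t2 u) (fun u => - t2d F1 F2 A B u)); [lra| |].
  - intros z Hz. apply (is_derive_opp (fun u => t2 u)). apply (dt2 F1 F2 F3 A B HF2 HF12 HF23 HA HAB z ltac:(lra)).
  - intros z Hz. assert (Hz' : 0 <= z <= 1) by lra.
    rewrite (t2d_eq F1 F2 F3 A B HF2 HF12 HF23 HA HAB z Hz').
    pose proof (g2_pos F1 F2 F3 A B HF2 HF12 HF23 HA HAB z Hz' (Hc z Hz')).
    pose proof (u2_gt F1 F2 F3 A B HF2 HF12 HF23 HA HAB z Hz'). pose proof (u1_pos F1 F2 F3 A B HF2 HF12 HF23 HA HAB z Hz').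
    assert (0 < g2 z / u2 z) by (apply Rdiv_lt_0_compat; lra). unfold Rdiv in *. lra.
Qed.

Lemma order2 t x x' : 0 <= t -> 0 <= x < x' -> x' <= 1 -> Y t x < Y t x'.
Proof.
  intros Ht H1 H2.
  assert (Hx : 0 <= x <= 1) by lra. assert (Hx' : 0 <= x' <= 1) by lra.
  pose proof (t1_lt x x' H1 H2) as L1. pose proof (t2_lt x x' H1 H2) as L2.
  assert (T1 : forall z, x <= z <= x' -> t1 x' <= t1 z <= t1 x).
  { intros z Hz. split.
    - destruct (Req_dec z x'). subst; lra. left; apply t1_lt; lra.
    - destruct (Req_dec z x). subst; lra. left; apply t1_lt; lra. }
  assert (T2 : forall z, x <= z <= x' -> t2 x' <= t2 z <= t2 x).
  { intros z Hz. split.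
    - destruct (Req_dec z x'). subst; lra. left; apply t2_lt; lra.
    - destruct (Req_dec z x). subst; lra. left; apply t2_lt; lra. }
  destruct (Rle_dec t (t1 x')) as [Ha|Ha].
  { rewrite !Y2_ph1 by lra. unfold Q1.Q1. lra. }
  destruct (Rle_dec t (t2 x')) as [Hb|Hb].
  { destruct (Rle_dec t (t1 x)) as [Hc1|Hc1].
    { pose proof (Y_le_A x t Hx ltac:(lra)). pose proof (Y_gt_A x' t Hx' ltac:(lra)). lra. }
    rewrite !Y2_ph2 by (auto; lra).
    apply (incr_MVT (fun u => Q2 F1 F2 A t u) (fun u => 1 + c2 u * (t - t1 u))); [lra| |].
    - intros z Hz. rewrite <- (dQ2_eq F1 F2 F3 A B HF2 HF12 HF23 HA HAB z ltac:(lra)).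
      apply (dQ2 F1 F2 F3 A B HF2 HF12 HF23 HA HAB z ltac:(lra)).
    - intros z Hz. assert (Hz' : 0 <= z <= 1) by lra.
      pose proof (c2_neg F1 F2 F3 A B HF2 HF12 HF23 HA HAB z Hz').
      pose proof (g2_c2 F1 F2 F3 A B HF2 HF12 HF23 HA HAB z Hz').
      pose proof (g2_pos F1 F2 F3 A B HF2 HF12 HF23 HA HAB z Hz' (Hc z Hz')).
      pose proof (T2 z Hz). nra. }
  destruct (Rle_dec t (t2 x)) as [Hc1|Hc1].
  { pose proof (Y_le_B x t Hx ltac:(lra)). pose proof (Y_gt_B x' t Hx' ltac:(lra)). lra. }
  rewrite !Y2_ph3 by (auto; lra).
  apply (incr_MVT (fun u => Q3 F1 F2 F3 A B t u) (fun u => g2 u + c3 u * (t - t2 u))); [lra| |].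
  - intros z Hz. rewrite <- (dQ3_eq F1 F2 F3 A B HF2 HF12 HF23 HA HAB z ltac:(lra)).
    apply (dQ3 F1 F2 F3 A B HF2 HF12 HF23 HA HAB z ltac:(lra)).
  - intros z Hz. assert (Hz' : 0 <= z <= 1) by lra.
    pose proof (g2_pos F1 F2 F3 A B HF2 HF12 HF23 HA HAB z Hz' (Hc z Hz')).
    pose proof (Hc z Hz'). pose proof (T2 z Hz). nra.
Qed.
End NoColl.

Definition UU := sqrt (2 * F1 * A + 2 * F2 * (B - A)).
Definition Tmax2 := UU / F1 + UU / F2.

Lemma t2_bound z : 0 <= z <= 1 -> t2 z <= Tmax2.
Proof.
  intros Hz. pose proof (u1_pos F1 F2 F3 A B HF2 HF12 HF23 HA HAB z Hz).
  pose proof (u2_gt F1 F2 F3 A B HF2 HF12 HF23 HA HAB z Hz).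
  assert (E1 : u1 z <= UU) by (unfold Q1.u1, UU; apply sqrt_le_1; nra).
  assert (E2 : u2 z <= UU) by (unfold Q1.u2, UU; apply sqrt_le_1; nra).
  unfold Q1.t2, Q1.t1, Tmax2.
  assert (u1 z / F1 <= UU / F1) by (apply Rmult_le_compat_r; [left; apply Rinv_0_lt_compat; lra | lra]).
  assert ((u2 z - u1 z) / F2 <= UU / F2) by (apply Rmult_le_compat_r; [left; apply Rinv_0_lt_compat; lra | lra]).
  lra.
Qed.

Lemma collision2 x0 : 0 <= x0 <= 1 -> c3 x0 < 0 ->
  exists t p q, 0 <= t /\ 0 <= p < q /\ q <= 1 /\ Y t p = Y t q.
Proof.
  intros Hx Hc.
  assert (HT0 : 0 <= Tmax2).
  { pose proof (t2_bound x0 Hx). pose proof (t1_pos F1 F2 F3 A B HF2 HF12 HF23 HA HAB x0 Hx).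
    pose proof (t12 F1 F2 F3 A B HF2 HF12 HF23 HA HAB x0 Hx). lra. }
  set (t := Tmax2 + t2 x0 + (Rabs (g2 x0) + 1) / (- c3 x0)).
  assert (Ht1 : forall z, 0 <= z <= 1 -> t2 z <= t).
  { intros z Hz. pose proof (t2_bound z Hz). pose proof (t1_pos F1 F2 F3 A B HF2 HF12 HF23 HA HAB x0 Hx).
    pose proof (t12 F1 F2 F3 A B HF2 HF12 HF23 HA HAB x0 Hx).
    assert (0 <= (Rabs (g2 x0) + 1) / (- c3 x0)) by (apply Rlt_le, Rdiv_lt_0_compat; [pose proof (Rabs_pos (g2 x0)) |]; lra).
    unfold t. lra. }
  assert (Hst : g2 x0 + c3 x0 * (t - t2 x0) < 0).
  { replace (t - t2 x0) with (Tmax2 + (Rabs (g2 x0) + 1) / (- c3 x0)) by (unfold t; ring).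
    replace (c3 x0 * (Tmax2 + (Rabs (g2 x0) + 1) / - c3 x0)) with (c3 x0 * Tmax2 - (Rabs (g2 x0) + 1)) by (field; lra).
    pose proof (Rle_abs (g2 x0)). nra. }
  assert (Hd := dQ3 F1 F2 F3 A B HF2 HF12 HF23 HA HAB x0 Hx t).
  rewrite (dQ3_eq F1 F2 F3 A B HF2 HF12 HF23 HA HAB x0 Hx) in Hd.
  destruct (deriv_small _ _ _ Hd Hst Hx) as [p [q [Hpq [Hq Hf]]]].
  assert (Hp1 : 0 <= p <= 1) by lra. assert (Hq1 : 0 <= q <= 1) by lra.
  set (G := fun r => Y r p - Y r q).
  assert (HG : continuity G).
  { intro r. apply continuity_pt_filterlim. unfold G.
    apply (cR_minus (fun r => Y r p) (fun r => Y r q)); apply cont_Y2. }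
  assert (G0 : G 0 < 0).
  { pose proof (t1_pos F1 F2 F3 A B HF2 HF12 HF23 HA HAB p Hp1).
    pose proof (t1_pos F1 F2 F3 A B HF2 HF12 HF23 HA HAB q Hq1).
    unfold G. rewrite !Y2_ph1 by lra. unfold Q1.Q1. lra. }
  assert (Gt : 0 < G t).
  { unfold G. rewrite !Y2_ph3; auto. lra. }
  assert (Ht0 : 0 < t).
  { pose proof (t1_pos F1 F2 F3 A B HF2 HF12 HF23 HA HAB x0 Hx). pose proof (t12 F1 F2 F3 A B HF2 HF12 HF23 HA HAB x0 Hx).
    pose proof (Ht1 x0 Hx). lra. }
  destruct (IVT G 0 t HG Ht0 G0 Gt) as [r [Hr Er]].
  exists r, p, q. split. lra. split. lra. split. lra. unfold G in Er. lra.
Qed.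
End Two.

End Q3.
Import Q3.

Module Q4.

Lemma part2 (F1 F2 F3 A B : R) : 0 < F2 -> F2 < F1 -> F2 < F3 -> 1 < A -> A < B ->
    forall y : R -> R -> R,
      is_trajectory (F_two_gaps F1 F2 F3 A B) (fun _ => 0) y ->
      (no_collisions y <-> B - A <= alpha F1 F2 F3 * (A - 1)).
Proof.
  intros HF2 HF12 HF23 HA HAB y Hy.
  pose proof (traj2 F1 F2 F3 A B HF2 HF12 HF23 HA HAB y Hy) as Ty.
  split.
  - intros NC.
    assert (H1 : 0 <= 1 <= 1) by lra.
    apply (c3_iff F1 F2 F3 A B HF2 HF12 HF23 HA HAB 1 H1).
    destruct (Rle_lt_dec 0 (c3 F1 F2 F3 A B 1)) as [|Hlt]; auto. exfalso.
    destruct (collision2 F1 F2 F3 A B HF2 HF12 HF23 HA HAB 1 H1 Hlt) as [t [p [q [Ht [Hp [Hq E]]]]]].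
    apply (NC t Ht p q ltac:(lra) ltac:(lra) ltac:(lra)).
    rewrite !Ty by (auto; lra). auto.
  - intros Hcond.
    assert (Hc : forall z, 0 <= z <= 1 -> 0 <= c3 F1 F2 F3 A B z).
    { intros z Hz. apply (c3_iff F1 F2 F3 A B HF2 HF12 HF23 HA HAB z Hz).
      assert (0 < alpha F1 F2 F3 * (A - 1)) by lra.
      assert (0 < alpha F1 F2 F3) by (apply Rmult_lt_reg_r with (A - 1); lra).
      nra. }
    intros t Ht x x' Hx Hx' Hne.
    rewrite !Ty by auto.
    destruct (Rlt_le_dec x x') as [Hl|Hl].
    + pose proof (order2 F1 F2 F3 A B HF2 HF12 HF23 HA HAB Hc t x x' Ht ltac:(lra) ltac:(lra)). lra.
    + pose proof (order2 F1 F2 F3 A B HF2 HF12 HF23 HA HAB Hc t x' x Ht ltac:(lra) ltac:(lra)). lra.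
Qed.


End Q4.
Import Q4.

Theorem theorem3 :
  (forall F1 F2 A : R, 0 < F1 -> 0 <= F2 -> 1 < A ->
    (forall y : R -> R -> R,
       is_trajectory (F_one_gap F1 F2 A) (fun _ => 0) y ->
       (no_collisions y <-> F2 >= F1)) /\
    (forall v dv : R -> R,
       (forall x, 0 <= x <= 1 -> is_derive v x (dv x)) ->
       (forall x, 0 <= x <= 1 -> continuous dv x) ->
       (forall x, 0 <= x <= 1 -> 0 <= v x) ->
       forall y : R -> R -> R,
         is_trajectory (F_one_gap F1 F2 A) v y ->
         (no_collisions y <->
          (forall x, 0 <= x <= 1 ->
             -2 * (A - x) * dv x < v x + sqrt (Dfun F1 A v x) /\
             dv x * ((F1 - F2) * v x + F2 * sqrt (Dfun F1 A v x)) >= F1 * (F1 - F2))))) /\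
  (forall F1 F2 F3 A B : R, 0 < F2 -> F2 < F1 -> F2 < F3 -> 1 < A -> A < B ->
    forall y : R -> R -> R,
      is_trajectory (F_two_gaps F1 F2 F3 A B) (fun _ => 0) y ->
      (no_collisions y <-> B - A <= alpha F1 F2 F3 * (A - 1))).
Proof.
  split.
  - intros F1 F2 A HF1 HF2 HA. split.
    + apply part1a; auto.
    + apply part1b; auto.
  - exact part2.
Qed.
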